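(* For each of the sets $\{000,001,010,100\}$, $\{000,001,010,100,111\}$ and $\{000,001,010,111\}$, and for every set obtained from any of them by any sequence of coordinate negations and coordinate permutations, $\rho(\mathcal S)=\log_2 6$.
   Context: Binary triples $(x_1,x_2,x_3)\in\{0,1\}^3$ are written $x_1x_2x_3$. Let $\mathcal S\subseteq\{0,1\}^3$ be nonempty. A distribution scheme with domain $\mathcal S$ is a pair $(P_R,\psi)$ where $P_R$ is a probability distribution on a finite set $\mathcal R$ and $\psi:\mathcal S\times\mathcal R\to\mathcal W_{12}\times\mathcal W_{23}\times\mathcal W_{31}$ for finite share alphabets. Given $\mathbf x=(x_1,x_2,x_3)\in\mathcal S$, the shares are $(W_{12},W_{23},W_{31})=\psi(\mathbf x,R)$, $R\sim P_R$. Party $P_1$ sees $V_1=(W_{12},W_{31})$, $P_2$ sees $V_2=(W_{23},W_{12})$, $P_3$ sees $V_3=(W_{31},W_{23})$. It is a 3SS scheme if (Correctness) for each $i$ there is a function $\phi_i$ with $\Pr[\phi_i(V_i)=x_i]=1$ for every $\mathbf x\in\mathcal S$, and (Perfect privacy) for each $i$ and all $\mathbf x,\mathbf x'\in\mathcal S$ with $x_i=x'_i$, $V_i$ has the same distribution under secret $\mathbf x$ as under $\mathbf x'$. The randomness complexity $\rho(\mathcal S)$ is the minimum of $\log_2|\mathcal R|$ over all 3SS schemes with domain $\mathcal S$. A coordinate negation maps $\mathcal S$ to $\{\mathbf x\oplus e_i:\mathbf x\in\mathcal S\}$; a coordinate permutation permutes the three coordinates of every element. *)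

(* Defs.v *)
From HB Require Import structures.
From mathcomp Require Import all_boot all_order all_algebra all_fingroup.
From Stdlib Require Import Reals.
From mathcomp Require Import Rstruct.

Set Implicit Arguments.
Unset Strict Implicit.
Unset Printing Implicit Defensive.

Import Order.TTheory GRing.Theory Num.Theory.

(* Binary triples x = (x_1,x_2,x_3), coordinates indexed by 'I_3 = {0,1,2}
   (index 0 is x_1, index 1 is x_2, index 2 is x_3). *)
Definition triple := {ffun 'I_3 -> bool}.

Definition tr (a b c : bool) : triple :=
  [ffun i : 'I_3 => nth false [:: a; b; c] (nat_of_ord i)].

Definition neg_coord (i : 'I_3) (x : triple) : triple :=
  [ffun j => if j == i then ~~ x j else x j].
Definition negate_set (i : 'I_3) (S : {set triple}) : {set triple} :=
  [set neg_coord i x | x in S].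

Definition perm_coord (s : 'S_3) (x : triple) : triple := [ffun j => x (s j)].
Definition permute_set (s : 'S_3) (S : {set triple}) : {set triple} :=
  [set perm_coord s x | x in S].

Inductive obtained_from (S0 : {set triple}) : {set triple} -> Prop :=
| obt_refl : obtained_from S0 S0
| obt_neg i S : obtained_from S0 S -> obtained_from S0 (negate_set i S)
| obt_perm s S : obtained_from S0 S -> obtained_from S0 (permute_set s S).

Local Open Scope ring_scope.

Definition is_distr (Rr : finType) (P : Rr -> R) : Prop :=
  (forall r, 0 <= P r) /\ \sum_(r : Rr) P r = 1.

Definition correct_for (S : {set triple}) (Rr : finType) (P : Rr -> R)
  (VT : finType) (V : triple -> Rr -> VT) (i : 'I_3) : Prop :=
  exists phi : VT -> bool,
    forall x, x \in S -> \sum_(r : Rr | phi (V x r) == x i) P r = 1.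

Definition private_for (S : {set triple}) (Rr : finType) (P : Rr -> R)
  (VT : finType) (V : triple -> Rr -> VT) (i : 'I_3) : Prop :=
  forall x x', x \in S -> x' \in S -> x i = x' i ->
    forall v : VT, \sum_(r : Rr | V x r == v) P r = \sum_(r : Rr | V x' r == v) P r.

Definition i0 : 'I_3 := @Ordinal 3 0 isT.
Definition i1 : 'I_3 := @Ordinal 3 1 isT.
Definition i2 : 'I_3 := @Ordinal 3 2 isT.

Definition view1 (Rr W12 W23 W31 : finType)
  (psi : triple -> Rr -> W12 * W23 * W31) x r : W12 * W31 :=
  let: (w12, w23, w31) := psi x r in (w12, w31).
Definition view2 (Rr W12 W23 W31 : finType)
  (psi : triple -> Rr -> W12 * W23 * W31) x r : W23 * W12 :=
  let: (w12, w23, w31) := psi x r in (w23, w12).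
Definition view3 (Rr W12 W23 W31 : finType)
  (psi : triple -> Rr -> W12 * W23 * W31) x r : W31 * W23 :=
  let: (w12, w23, w31) := psi x r in (w31, w23).

(* (P_R, psi) is a 3SS scheme with domain S.  psi is defined on all triples;
   only its restriction to S matters in every condition. *)
Definition is_3SS (S : {set triple}) (Rr W12 W23 W31 : finType)
  (P : Rr -> R) (psi : triple -> Rr -> W12 * W23 * W31) : Prop :=
  is_distr P /\
  correct_for S P (view1 psi) i0 /\ correct_for S P (view2 psi) i1 /\
  correct_for S P (view3 psi) i2 /\
  private_for S P (view1 psi) i0 /\ private_for S P (view2 psi) i1 /\
  private_for S P (view3 psi) i2.

Definition log2 (x : R) : R := (ln x / ln 2)%R.

Definition achievable (S : {set triple}) (k : R) : Prop :=
  exists (Rr W12 W23 W31 : finType) (P : Rr -> R)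
         (psi : triple -> Rr -> W12 * W23 * W31),
    is_3SS S P psi /\ k = log2 (INR #|Rr|).

Definition rho_is (S : {set triple}) (v : R) : Prop :=
  achievable S v /\ forall k, achievable S k -> v <= k.

Definition S_A : {set triple} :=
  [set tr false false false; tr false false true; tr false true false;
       tr true false false].
Definition S_B : {set triple} :=
  [set tr false false false; tr false false true; tr false true false;
       tr true false false; tr true true true].
Definition S_C : {set triple} :=
  [set tr false false false; tr false false true; tr false true false;
       tr true true true].

(* Main.v *)
Require Import Defs.
From mathcomp Require Import all_boot all_order all_algebra all_fingroup.
From Stdlib Require Import Reals.
From mathcomp Require Import Rstruct.

Set Implicit Arguments.
Unset Strict Implicit.
Unset Printing Implicit Defensive.
Import Order.TTheory GRing.Theory Num.Theory.
Local Open Scope ring_scope.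

Lemma distr_pos (Rr : finType) (P : Rr -> R) : is_distr P -> exists r, 0 < P r.
Proof.
move=> [Hge Hs]; case: (pickP (fun r => 0 < P r)) => [r Hr|none]; first by exists r.
exfalso; have : \sum_(r : Rr) P r = 0.
  apply: big1 => r _; apply/eqP; rewrite eq_le Hge andbT.
  by move: (none r); rewrite /= lt_neqAle Hge andbT eq_sym => /negbFE/eqP ->.
by rewrite Hs => /eqP; rewrite oner_eq0.
Qed.

Lemma corr_pos (S : {set triple}) (Rr VT : finType) (P : Rr -> R) (V : triple -> Rr -> VT) i :
  is_distr P -> correct_for S P V i ->
  exists phi : VT -> bool, forall x r, x \in S -> 0 < P r -> phi (V x r) = x i.
Proof.
move=> [Hge Hs] [phi Hphi]; exists phi => x r xS Pr.
apply/eqP; apply: contraTT Pr => Hn; rewrite -leNgt.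
have H0 : \sum_(r | ~~ (phi (V x r) == x i)) P r = 0.
  move: Hs; rewrite (bigID (fun r => phi (V x r) == x i)) /= (Hphi x xS).
  by move=> /eqP; rewrite -subr_eq0 addrAC subrr add0r => /eqP.
by rewrite (psumr_eq0P (fun r _ => Hge r) H0 Hn).
Qed.

Lemma priv_pos (S : {set triple}) (Rr VT : finType) (P : Rr -> R) (V : triple -> Rr -> VT) i :
  is_distr P -> private_for S P V i ->
  forall x x' r, x \in S -> x' \in S -> x i = x' i -> 0 < P r ->
  exists r', 0 < P r' /\ V x' r' = V x r.
Proof.
move=> [Hge Hs] Hp x x' r xS x'S Ex Pr.
case: (pickP (fun r' => (0 < P r') && (V x' r' == V x r))) => [r' /andP[H1 /eqP H2]|none].
  by exists r'.
exfalso.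
have H1 : \sum_(r'' | V x' r'' == V x r) P r'' = 0.
  apply: big1 => r'' /eqP E; apply/eqP; rewrite eq_le Hge andbT.
  by have := none r''; rewrite /= E eqxx andbT => /negbT; rewrite -leNgt.
have H2 : 0 < \sum_(r'' | V x r'' == V x r) P r''.
  rewrite (bigD1 r) //=; apply: (lt_le_trans Pr); rewrite lerDl.
  by apply: sumr_ge0 => ? _.
by move: H2; rewrite (Hp x x' xS x'S Ex) H1 ltxx.
Qed.


Lemma v1E (Rr W12 W23 W31 : finType) (psi : triple -> Rr -> W12 * W23 * W31) x r :
  view1 psi x r = ((psi x r).1.1, (psi x r).2).
Proof. by rewrite /view1; case: (psi x r) => [[]]. Qed.
Lemma v2E (Rr W12 W23 W31 : finType) (psi : triple -> Rr -> W12 * W23 * W31) x r :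
  view2 psi x r = ((psi x r).1.2, (psi x r).1.1).
Proof. by rewrite /view2; case: (psi x r) => [[]]. Qed.
Lemma v3E (Rr W12 W23 W31 : finType) (psi : triple -> Rr -> W12 * W23 * W31) x r :
  view3 psi x r = ((psi x r).2, (psi x r).1.2).
Proof. by rewrite /view3; case: (psi x r) => [[]]. Qed.

Lemma trE a b c : ((tr a b c) i0 = a) * ((tr a b c) i1 = b) * ((tr a b c) i2 = c).
Proof. by rewrite !ffunE. Qed.

Lemma neq_of (A B : eqType) (f : A -> B) x y : f x != f y -> x != y.
Proof. by apply: contraNneq => ->. Qed.

Definition ta := tr false false false.
Definition tb := tr false false true.
Definition tc := tr false true false.

Lemma lb (S : {set triple}) (Rr W12 W23 W31 : finType) (P : Rr -> R)
  (psi : triple -> Rr -> W12 * W23 * W31) (e : triple) :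
  is_3SS S P psi -> ta \in S -> tb \in S -> tc \in S -> e \in S -> e i0 = true ->
  (forall re, 0 < P re ->
     (exists ra, 0 < P ra /\ (psi ta ra).1.1 = (psi e re).1.1) /\
     (exists rb, 0 < P rb /\ (psi ta rb).2 = (psi e re).2)) ->
  leq 6 #|Rr|.
Proof.
move=> [HD [C1 [C2 [C3 [P1 [P2 P3]]]]]] Ha Hb Hc He He1 Htr.
have [phi1 F1] := corr_pos HD C1.
have [phi2 F2] := corr_pos HD C2.
have [phi3 F3] := corr_pos HD C3.
have Q1 := priv_pos HD P1. have Q2 := priv_pos HD P2. have Q3 := priv_pos HD P3.
have eab0 : ta i0 = tb i0 by rewrite /ta /tb !trE.
have eab1 : tb i1 = ta i1 by rewrite /ta /tb !trE.
have eac0 : ta i0 = tc i0 by rewrite /ta /tc !trE.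
have eac2 : tc i2 = ta i2 by rewrite /ta /tc !trE.
pose s12 x r := (psi x r).1.1. pose s23 x r := (psi x r).1.2. pose s31 x r := (psi x r).2.
have rowX : forall r0, 0 < P r0 -> exists r, [/\ 0 < P r, s12 ta r = s12 ta r0 & s31 ta r != s31 ta r0].
  move=> r0 H0.
  case: (pickP (fun r => [&& 0 < P r, s12 ta r == s12 ta r0 & s31 ta r != s31 ta r0])) =>
    [r /and3P[H1 /eqP H2 H3]|none]; first by exists r.
  have [r1 [H1 E1]] := Q1 ta tb r0 Ha Hb eab0 H0.
  move: E1; rewrite !v1E => -[E1a E1c].
  have [r2 [H2 E2]] := Q2 tb ta r1 Hb Ha eab1 H1.
  move: E2; rewrite !v2E => -[E2b E2a].
  have E3 : s31 ta r2 = s31 ta r0.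
    by have := none r2; rewrite /= H2 /s12 E2a E1a eqxx /= => /negbT; rewrite negbK => /eqP.
  have := F3 ta r2 Ha H2; have := F3 tb r1 Hb H1.
  rewrite !v3E /ta /tb /tc !trE -/(s31 ta r2) E3 /s31 -E1c E2b => ->; done.
have colY : forall r0, 0 < P r0 -> exists r, [/\ 0 < P r, s31 ta r = s31 ta r0 & s12 ta r != s12 ta r0].
  move=> r0 H0.
  case: (pickP (fun r => [&& 0 < P r, s31 ta r == s31 ta r0 & s12 ta r != s12 ta r0])) =>
    [r /and3P[H1 /eqP H2 H3]|none]; first by exists r.
  have [r1 [H1 E1]] := Q1 ta tc r0 Ha Hc eac0 H0.
  move: E1; rewrite !v1E => -[E1a E1c].
  have [r2 [H2 E2]] := Q3 tc ta r1 Hc Ha eac2 H1.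
  move: E2; rewrite !v3E => -[E2c E2b].
  have E3 : s12 ta r2 = s12 ta r0.
    by have := none r2; rewrite /= H2 /s31 E2c E1c eqxx /= => /negbT; rewrite negbK => /eqP.
  have := F2 ta r2 Ha H2; have := F2 tc r1 Hc H1.
  rewrite !v2E /ta /tb /tc !trE -/(s12 ta r2) E3 /s12 -E1a E2b => ->; done.
have [re Hre] := distr_pos HD.
have [[ra [Hra Ea]] [rb [Hrb Eb]]] := Htr re Hre.
have [r1 [Hr1 E1 N1]] := rowX ra Hra.
have Fe := F1 e re He Hre. rewrite v1E He1 in Fe.
have Ng1 : s31 ta ra != s31 ta rb.
  apply/eqP => E; have := F1 ta ra Ha Hra; rewrite v1E trE Ea.
  by rewrite /s31 in E; rewrite E Eb Fe.
have Ng2 : s31 ta r1 != s31 ta rb.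
  apply/eqP => E; have := F1 ta r1 Ha Hr1; rewrite v1E trE.
  by rewrite /s31 in E; rewrite /s12 in E1; rewrite E E1 Ea Eb Fe.
have [rb' [Hrb' Eb' Nb']] := colY rb Hrb.
have [ra' [Hra' Ea' Na']] := colY ra Hra.
have [r1' [Hr1' E1' N1']] := colY r1 Hr1.
have Hu : uniq [:: rb; rb'; ra; ra'; r1; r1'].
  rewrite /= !inE !negb_or.
  have n12 := @neq_of _ _ (s12 ta). have n31 := @neq_of _ _ (s31 ta).
  rewrite !andbT; repeat (apply/andP; split).
  all: try first [ apply: n31; rewrite ?Eb' ?Ea' ?E1'; (done || by rewrite eq_sym)
             | apply: n12; (done || by rewrite eq_sym) ].
move/card_uniqP: Hu => Hu.
by have := max_card (mem [:: rb; rb'; ra; ra'; r1; r1']); rewrite Hu.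
Qed.

Lemma eqxorb (p q b : bool) : (p (+) b == q (+) b) = (p == q).
Proof. by case: p; case: q; case: b. Qed.

Lemma corr_tr (S T : {set triple}) (Rr VT VT' : finType) (P : Rr -> R)
  (V : triple -> Rr -> VT) (V' : triple -> Rr -> VT') (g : VT -> VT')
  (f : triple -> triple) (j k : 'I_3) (b : bool) :
  correct_for S P V k -> (forall x, x \in T -> f x \in S) ->
  (forall x, x \in T -> x j = (f x) k (+) b) ->
  (forall phi : VT -> bool, exists phi' : VT' -> bool, forall y, phi' (g y) = phi y) ->
  (forall x r, V' x r = g (V (f x) r)) ->
  correct_for T P V' j.
Proof.
move=> [phi Hphi] HT Hj hK HV; have [phi' Hphi'] := hK phi.
exists (fun v => phi' v (+) b) => x xT.
rewrite -(Hphi (f x) (HT x xT)); apply: eq_bigl => r.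
by rewrite HV Hphi' Hj // eqxorb.
Qed.

Lemma priv_tr (S T : {set triple}) (Rr VT VT' : finType) (P : Rr -> R)
  (V : triple -> Rr -> VT) (V' : triple -> Rr -> VT') (g : VT -> VT')
  (f : triple -> triple) (j k : 'I_3) :
  private_for S P V k -> (forall x, x \in T -> f x \in S) ->
  (forall x x', x \in T -> x' \in T -> x j = x' j -> (f x) k = (f x') k) ->
  (forall x r, V' x r = g (V (f x) r)) ->
  private_for T P V' j.
Proof.
move=> Hp HT Hj HV x x' xT x'T Ex v.
have E : forall y, \sum_(r | V' y r == v) P r =
   \sum_(w | g w == v) \sum_(r | V (f y) r == w) P r.
  move=> y; rewrite (eq_bigl (fun r => g (V (f y) r) == v)); last by move=> r; rewrite HV.
  rewrite (partition_big (fun r => V (f y) r) (fun w => g w == v)) //.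
  apply: eq_bigr => w /eqP gw; apply: eq_bigl => r.
  by case: (V (f y) r =P w) => [->|]; rewrite ?gw ?eqxx ?andbF ?andbT.
rewrite !E; apply: eq_bigr => w _.
exact: Hp (HT x xT) (HT x' x'T) (Hj x x' xT x'T Ex) w.
Qed.

Lemma neg_coordK i : involutive (neg_coord i).
Proof. by move=> x; apply/ffunP => j; rewrite !ffunE; case: (j == i); rewrite ?negbK. Qed.

Lemma neg_achievable i S k : achievable S k -> achievable (negate_set i S) k.
Proof.
move=> [Rr [W12 [W23 [W31 [P [psi [[HD [C1 [C2 [C3 [P1 [P2 P3]]]]]] ->]]]]]]].
exists Rr, W12, W23, W31, P, (fun x r => psi (neg_coord i x) r); split => //.
have HT : forall x, x \in negate_set i S -> neg_coord i x \in S.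
  by move=> x /imsetP [y yS ->]; rewrite neg_coordK.
have Hj : forall j x, x \in negate_set i S -> x j = (neg_coord i x) j (+) (j == i).
  by move=> j x _; rewrite ffunE; case: (j == i); rewrite ?addbT ?addbF ?negbK.
have Hp : forall j x x', x \in negate_set i S -> x' \in negate_set i S -> x j = x' j ->
   (neg_coord i x) j = (neg_coord i x') j.
  by move=> j x x' _ _ E; rewrite !ffunE E.
split => //; split; first by apply: (corr_tr (g := fun y : W12 * W31 => y)  C1 HT (Hj i0)) => // phi; exists phi.
split; first by apply: (corr_tr (g := fun y : W23 * W12 => y)  C2 HT (Hj i1)) => // phi; exists phi.
split; first by apply: (corr_tr (g := fun y : W31 * W23 => y)  C3 HT (Hj i2)) => // phi; exists phi.
split; first by apply:  (priv_tr (g := fun y : W12 * W31 => y) P1 HT (Hp i0)).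
split; first by apply:  (priv_tr (g := fun y : W23 * W12 => y) P2 HT (Hp i1)).
by apply: (priv_tr (g := fun y : W31 * W23 => y) P3 HT (Hp i2)).
Qed.

Definition comp (W12 W23 W31 : Type) (k : 'I_3) (w : W12 * W23 * W31) : (W12 + W23 + W31)%type :=
  if val k == 0%N then inl (inl w.1.1) else if val k == 1%N then inl (inr w.1.2) else inr w.2.
Definition pick (p q : 'I_3) : 'I_3 := if q == ordS p then p else q.
Definition oview (W12 W23 W31 : Type) (k : 'I_3) (w : W12 * W23 * W31) :=
  (comp k w, comp (ord_pred k) w).

Lemma key3 (a b c : 'I_3) : a != b -> b != c -> a != c ->
  (pick a b = a /\ pick c a = ord_pred a) \/ (pick a b = ord_pred a /\ pick c a = a).
Proof.
case: a b c => [[|[|[|?]]] Ha] [[|[|[|?]]] Hb] [[|[|[|?]]] Hc] //= _ _ _;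
  rewrite /pick /=; (by left; split; apply: val_inj) || (by right; split; apply: val_inj).
Qed.

Lemma I3_cases (k : 'I_3) : k = i0 \/ k = i1 \/ k = i2.
Proof.
case: k => [[|[|[|?]]] Hk] //.
- by left; apply: val_inj.
- by right; left; apply: val_inj.
- by right; right; apply: val_inj.
Qed.

Definition idt (x : triple) := x.

Lemma UNI (S : {set triple}) (Rr W12 W23 W31 : finType) (P : Rr -> R)
  (psi : triple -> Rr -> W12 * W23 * W31) (k : 'I_3) :
  is_3SS S P psi ->
  correct_for S P (fun x r => oview k (psi x r)) k /\
  private_for S P (fun x r => oview k (psi x r)) k.
Proof.
move=> [HD [C1 [C2 [C3 [P1 [P2 P3]]]]]].
have HT : forall x, x \in S -> idt x \in S by [].
have Hj : forall j x, x \in S -> x j = (idt x) j (+) false by move=> j x _; rewrite addbF.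
have Hp : forall j x x', x \in S -> x' \in S -> x j = x' j -> (idt x) j = (idt x') j by [].
have pi0 : ord_pred i0 = i2 by apply: val_inj.
have pi1 : ord_pred i1 = i0 by apply: val_inj.
have pi2 : ord_pred i2 = i1 by apply: val_inj.
case: (I3_cases k) => [->|[->|->]]; rewrite /oview ?pi0 ?pi1 ?pi2.
- pose g := fun y : W12 * W31 => (@inl _ W31 (@inl _ W23 y.1), @inr (W12 + W23)%type _ y.2).
  have HV : forall x r, (comp i0 (psi x r), comp i2 (psi x r)) = g (view1 psi (idt x) r).
    by move=> x r; rewrite v1E.
  split; last exact: (priv_tr P1 HT (Hp i0) HV).
  apply: (corr_tr C1 HT (Hj i0) _ HV) => phi.
  exists (fun v => match v with (inl (inl a), inr b) => phi (a, b) | _ => false end).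
  by case.
- pose g := fun y : W23 * W12 => (@inl _ W31 (@inr W12 _ y.1), @inl _ W31 (@inl _ W23 y.2)).
  have HV : forall x r, (comp i1 (psi x r), comp i0 (psi x r)) = g (view2 psi (idt x) r).
    by move=> x r; rewrite v2E.
  split; last exact: (priv_tr P2 HT (Hp i1) HV).
  apply: (corr_tr C2 HT (Hj i1) _ HV) => phi.
  exists (fun v => match v with (inl (inr a), inl (inl b)) => phi (a, b) | _ => false end).
  by case.
- pose g := fun y : W31 * W23 => (@inr (W12 + W23)%type _ y.1, @inl _ W31 (@inr W12 _ y.2)).
  have HV : forall x r, (comp i2 (psi x r), comp i1 (psi x r)) = g (view3 psi (idt x) r).
    by move=> x r; rewrite v3E.
  split; last exact: (priv_tr P3 HT (Hp i2) HV).
  apply: (corr_tr C3 HT (Hj i2) _ HV) => phi.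
  exists (fun v => match v with (inr a, inl (inr b)) => phi (a, b) | _ => false end).
  by case.
Qed.

Lemma perm_party (S T : {set triple}) (Rr W12 W23 W31 : finType) (P : Rr -> R)
  (psi : triple -> Rr -> W12 * W23 * W31) (f : triple -> triple) (a b c j : 'I_3)
  (V' : triple -> Rr -> ((W12 + W23 + W31) * (W12 + W23 + W31))%type) :
  is_3SS S P psi -> a != b -> b != c -> a != c ->
  (forall x, x \in T -> f x \in S) -> (forall x : triple, x j = (f x) a) ->
  (forall x r, V' x r = (comp (pick a b) (psi (f x) r), comp (pick c a) (psi (f x) r))) ->
  correct_for T P V' j /\ private_for T P V' j.
Proof.
move=> H3 ab bc ac HT Hj HV.
have [Cu Pu] := UNI a H3.
have Hj' : forall x, x \in T -> x j = (f x) a (+) false by move=> x _; rewrite addbF.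
have Hp : forall x x', x \in T -> x' \in T -> x j = x' j -> (f x) a = (f x') a.
  by move=> x x' _ _; rewrite !Hj.
case: (key3 ab bc ac) => [[E1 E2]|[E1 E2]].
- have HV' : forall x r, V' x r = (fun y => y) (oview a (psi (f x) r)).
    by move=> x r; rewrite HV E1 E2.
  split; last exact: (priv_tr (g := fun y : _ * _ => y) Pu HT Hp HV').
  by apply: (corr_tr (g := fun y : _ * _ => y) Cu HT Hj' _ HV') => phi; exists phi.
- have HV' : forall x r, V' x r = (fun y => (y.2, y.1)) (oview a (psi (f x) r)).
    by move=> x r; rewrite HV E1 E2.
  split; last exact: (priv_tr (g := fun y : _ * _ => (y.2, y.1)) Pu HT Hp HV').
  apply: (corr_tr (g := fun y : _ * _ => (y.2, y.1)) Cu HT Hj' _ HV') => phi.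
  by exists (fun y : _ * _ => phi (y.2, y.1)); case.
Qed.

Lemma perm_achievable (s : 'S_3) S k : achievable S k -> achievable (permute_set s S) k.
Proof.
move=> [Rr [W12 [W23 [W31 [P [psi [H3 ->]]]]]]].
pose W := (W12 + W23 + W31)%type.
pose f := perm_coord s^-1.
pose psi' := fun x r => let w := psi (f x) r in
  (comp (pick (s i0) (s i1)) w, comp (pick (s i1) (s i2)) w, comp (pick (s i2) (s i0)) w).
exists Rr, W, W, W, P, psi'; split => //.
have HT : forall x, x \in permute_set s S -> f x \in S.
  move=> x /imsetP [y yS ->]; suff -> : f (perm_coord s y) = y by [].
  by apply/ffunP => j; rewrite !ffunE permKV.
have Hj : forall j (x : triple), x j = (f x) (s j) by move=> j x; rewrite ffunE permK.
have d : forall p q : 'I_3, p != q -> s p != s q by move=> p q; rewrite (inj_eq perm_inj).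
have d01 : s i0 != s i1 by apply: d. have d12 : s i1 != s i2 by apply: d.
have d02 : s i0 != s i2 by apply: d.
have d10 : s i1 != s i0 by rewrite eq_sym. have d20 : s i2 != s i0 by rewrite eq_sym.
have d21 : s i2 != s i1 by rewrite eq_sym.
have [A1 B1] := perm_party H3 d01 d12 d02 HT (Hj i0) (V' := view1 psi')
  (fun x r => erefl).
have [A2 B2] := perm_party H3 d12 d20 d10 HT (Hj i1) (V' := view2 psi')
  (fun x r => erefl).
have [A3 B3] := perm_party H3 d20 d01 d21 HT (Hj i2) (V' := view3 psi')
  (fun x r => erefl).
case: H3 => HD _; exact: (conj HD (conj A1 (conj A2 (conj A3 (conj B1 (conj B2 B3)))))).
Qed.

Definition dd (x0 x1 x2 t : bool) : 'Z_3 * 'Z_3 :=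
  let k : 'Z_3 := if t then 1 else 2 in
  match x0, x1, x2 with
  | false, false, false => (k, k)
  | false, false, true => (k, - k)
  | false, true, false => (k, 0)
  | true, false, false => (0, k)
  | _, _, _ => (0, 0)
  end.

Definition RrS := ('Z_3 * bool)%type.
Definition psiS (x : triple) (r : RrS) : 'Z_3 * 'Z_3 * 'Z_3 :=
  let d := dd (x i0) (x i1) (x i2) r.2 in (r.1, r.1 + d.2, r.1 - d.1).
Definition PS (r : RrS) : R := ((@GRing.one R) *+ 6)^-1.

Definition hh (c : bool -> 'Z_3) (e : bool) (r : RrS) : RrS := (r.1 + c r.2, r.2 (+) e).
Lemma hh_inj c e : injective (hh c e).
Proof.
move=> [u t] [u' t'] E.
have E2 : t (+) e = t' (+) e by have := congr1 snd E.
have Et : t = t' by clear E; move: E2; case: e; case: t; case: t'.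
subst t'.
have E1 : u + c t = u' + c t by have := congr1 fst E.
by congr pair; rewrite -[u](addrK (c t)) E1 addrK.
Qed.

Lemma cardRrS : #|{: RrS}| = S (S (S (S (S (S O))))).
Proof. by rewrite card_prod card_ord card_bool. Qed.

Lemma distrS : is_distr PS.
Proof.
split; first by move=> r; rewrite /PS invr_ge0 ler0n.
rewrite sumr_const cardRrS /PS; set c := (@GRing.one R *+ 6).
have -> : c^-1 *+ 6 = c^-1 * c by rewrite -mulr_natr /c.
by apply: mulVf; rewrite /c pnatr_eq0.
Qed.

Lemma mem_SB x : x \in S_B -> x = tr false false false \/ x = tr false false true \/
  x = tr false true false \/ x = tr true false false \/ x = tr true true true.
Proof.
rewrite !inE => /orP[/orP[/orP[/orP[/eqP->|/eqP->]|/eqP->]|/eqP->]|/eqP->]; tauto.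
Qed.

Lemma corr_const (S : {set triple}) (VT : finType) (V : triple -> RrS -> VT) j (phi : VT -> bool) :
  (forall x r, x \in S -> phi (V x r) = x j) -> correct_for S PS V j.
Proof.
move=> H; exists phi => x xS; rewrite -(proj2 distrS); apply: eq_bigl => r.
by rewrite H // eqxx.
Qed.

Lemma priv_const (S : {set triple}) (VT : finType) (V : triple -> RrS -> VT) j :
  (forall x x', x \in S -> x' \in S -> x j = x' j ->
     exists (c : bool -> 'Z_3) e, forall r, V x' (hh c e r) = V x r) -> private_for S PS V j.
Proof.
move=> H x x' xS x'S E v; have [c [e Hh]] := H x x' xS x'S E.
rewrite [RHS](reindex_inj (@hh_inj c e)) /PS; apply: eq_bigl => r.
by rewrite Hh.
Qed.

Ltac zcases := let u := fresh "u" in let t := fresh "t" in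
  case=> u t; case: u => [[|[|[|?]]] ?] //; case: t.

Ltac chk vE := zcases; rewrite !vE /psiS !trE; apply/eqP; done.
Ltac findc vE e := first [
    exists (fun t : bool => if t then 0 else 0), e; chk vE
  | exists (fun t : bool => if t then 0 else 1), e; chk vE
  | exists (fun t : bool => if t then 0 else 2), e; chk vE
  | exists (fun t : bool => if t then 1 else 0), e; chk vE
  | exists (fun t : bool => if t then 1 else 1), e; chk vE
  | exists (fun t : bool => if t then 1 else 2), e; chk vE
  | exists (fun t : bool => if t then 2 else 0), e; chk vE
  | exists (fun t : bool => if t then 2 else 1), e; chk vE
  | exists (fun t : bool => if t then 2 else 2), e; chk vE ].
Ltac findh vE := first [ findc vE false | findc vE true ].

Lemma schemeSB : is_3SS S_B PS psiS.
Proof.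
split; first exact: distrS.
split.
  apply: (corr_const (phi := fun v => v.1 == v.2)) => x r /mem_SB.
  by case=> [->|[->|[->|[->|->]]]]; rewrite v1E /psiS !trE; move: r; zcases.
split.
  apply: (corr_const (phi := fun v => v.1 == v.2)) => x r /mem_SB.
  by case=> [->|[->|[->|[->|->]]]]; rewrite v2E /psiS !trE; move: r; zcases.
split.
  apply: (corr_const (phi := fun v => v.1 == v.2)) => x r /mem_SB.
  by case=> [->|[->|[->|[->|->]]]]; rewrite v3E /psiS !trE; move: r; zcases.
split.
  { apply: priv_const => x x' /mem_SB Hx /mem_SB Hx'.
  case: Hx => [->|[->|[->|[->|->]]]]; case: Hx' => [->|[->|[->|[->|->]]]]; rewrite !trE // => _.
  all: findh v1E. }
split.
  { apply: priv_const => x x' /mem_SB Hx /mem_SB Hx'.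
  case: Hx => [->|[->|[->|[->|->]]]]; case: Hx' => [->|[->|[->|[->|->]]]]; rewrite !trE // => _.
  all: findh v2E. }
apply: priv_const => x x' /mem_SB Hx /mem_SB Hx'.
case: Hx => [->|[->|[->|[->|->]]]]; case: Hx' => [->|[->|[->|[->|->]]]]; rewrite !trE // => _.
all: findh v3E.
Qed.

From Stdlib Require Import Lra.

Lemma ln2_pos : Rlt 0 (ln 2).
Proof. rewrite -ln_1; apply: ln_increasing; lra. Qed.

Lemma log2_mono (n : nat) : leq 6 n -> Rle (log2 (IZR 6)) (log2 (INR n)).
Proof.
move=> H; rewrite /log2 /Rdiv; apply: Rmult_le_compat_r.
  by left; apply: Rinv_0_lt_compat; exact: ln2_pos.
have H6 : Rle (IZR 6) (INR n).
  have -> : IZR 6 = INR 6 by rewrite INR_IZR_INZ.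
  by apply: le_INR; apply/ssrnat.leP.
case: (Rle_lt_or_eq_dec _ _ H6) => [lt|<-]; last by right.
by left; apply: ln_increasing => //; lra.
Qed.

Lemma is_3SS_sub (S S' : {set triple}) (Rr W12 W23 W31 : finType) (P : Rr -> R)
  (psi : triple -> Rr -> W12 * W23 * W31) :
  S \subset S' -> is_3SS S' P psi -> is_3SS S P psi.
Proof.
move=> /subsetP sub [HD [[f1 C1] [[f2 C2] [[f3 C3] [P1 [P2 P3]]]]]].
split => //; split; first by exists f1 => x /sub; apply: C1.
split; first by exists f2 => x /sub; apply: C2.
split; first by exists f3 => x /sub; apply: C3.
split; first by move=> x x' /sub xS /sub x'S; apply: P1.
split; first by move=> x x' /sub xS /sub x'S; apply: P2.
by move=> x x' /sub xS /sub x'S; apply: P3.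
Qed.

Lemma ach_sub (S : {set triple}) : S \subset S_B -> achievable S (log2 (IZR 6)).
Proof.
move=> sub; exists RrS, ('Z_3 : finType), ('Z_3 : finType), ('Z_3 : finType), PS, psiS.
split; first exact: (is_3SS_sub sub schemeSB).
by rewrite cardRrS INR_IZR_INZ.
Qed.

Definition td := tr true false false.
Definition te := tr true true true.

Lemma lbA (S : {set triple}) k : ta \in S -> tb \in S -> tc \in S -> td \in S ->
  achievable S k -> log2 (IZR 6) <= k.
Proof.
move=> Ha Hb Hc Hd [Rr [W12 [W23 [W31 [P [psi [H3 ->]]]]]]].
apply/RleP; apply: log2_mono.
apply: (lb H3 Ha Hb Hc Hd); first by rewrite /td trE.
case: (H3) => [HD [_ [_ [_ [_ [P2 P3]]]]]].
move=> re Hre; split.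
  have ee1 : td i1 = ta i1 by rewrite /td /ta !trE.
  have [r [Hr E]] := priv_pos HD P2 Hd Ha ee1 Hre.
  by exists r; split => //; move: E; rewrite !v2E => -[].
have ee2 : td i2 = ta i2 by rewrite /td /ta !trE.
have [r [Hr E]] := priv_pos HD P3 Hd Ha ee2 Hre.
by exists r; split => //; move: E; rewrite !v3E => -[].
Qed.

Lemma lbC (S : {set triple}) k : ta \in S -> tb \in S -> tc \in S -> te \in S ->
  achievable S k -> log2 (IZR 6) <= k.
Proof.
move=> Ha Hb Hc He [Rr [W12 [W23 [W31 [P [psi [H3 ->]]]]]]].
apply/RleP; apply: log2_mono.
apply: (lb H3 Ha Hb Hc He); first by rewrite /te trE.
case: (H3) => [HD [_ [_ [_ [P1 [P2 P3]]]]]].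
move=> re Hre; split.
  have ee3 : te i1 = tc i1 by rewrite /te /tc !trE.
  have [r [Hr E]] := priv_pos HD P2 He Hc ee3 Hre.
  have ee4 : tc i0 = ta i0 by rewrite /tc /ta !trE.
  have [r' [Hr' E']] := priv_pos HD P1 Hc Ha ee4 Hr.
  exists r'; split => //; move: E E'; rewrite !v2E !v1E => -[_ <-] -[<- _] //.
have ee5 : te i2 = tb i2 by rewrite /te /tb !trE.
have [r [Hr E]] := priv_pos HD P3 He Hb ee5 Hre.
have ee6 : tb i0 = ta i0 by rewrite /tb /ta !trE.
have [r' [Hr' E']] := priv_pos HD P1 Hb Ha ee6 Hr.
exists r'; split => //; move: E E'; rewrite !v3E !v1E => -[<- _] -[_ <-] //.
Qed.

Lemma negateK i S : negate_set i (negate_set i S) = S.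
Proof.
rewrite /negate_set -imset_comp (eq_imset _ (neg_coordK i)) imset_id //.
Qed.

Lemma permuteK (s : 'S_3) S : permute_set s^-1 (permute_set s S) = S.
Proof.
rewrite /permute_set -imset_comp (@eq_imset _ _ _ (fun x => x)) ?imset_id // => x /=.
by apply/ffunP => j; rewrite !ffunE permKV.
Qed.

Lemma rho_neg i S v : rho_is S v -> rho_is (negate_set i S) v.
Proof.
move=> [Ha Hl]; split; first exact: neg_achievable.
move=> k /(neg_achievable i); rewrite negateK; exact: Hl.
Qed.

Lemma rho_perm (s : 'S_3) S v : rho_is S v -> rho_is (permute_set s S) v.
Proof.
move=> [Ha Hl]; split; first exact: perm_achievable.
move=> k /(perm_achievable s^-1); rewrite permuteK; exact: Hl.
Qed.

Lemma rhoA : rho_is S_A (log2 (IZR 6)).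
Proof.
split.
  apply: ach_sub; apply/subsetP => x; rewrite !inE.
  by move=> /orP[/orP[/orP[->|->]|->]|->]; rewrite ?orbT.
by move=> k; apply: lbA; rewrite /ta /tb /tc /td !inE eqxx ?orbT.
Qed.

Lemma rhoB : rho_is S_B (log2 (IZR 6)).
Proof.
split; first by apply: ach_sub; rewrite subxx.
by move=> k; apply: lbA; rewrite /ta /tb /tc /td !inE eqxx ?orbT.
Qed.

Lemma rhoC : rho_is S_C (log2 (IZR 6)).
Proof.
split.
  apply: ach_sub; apply/subsetP => x; rewrite !inE.
  by move=> /orP[/orP[/orP[->|->]|->]|->]; rewrite ?orbT.
by move=> k; apply: lbC; rewrite /ta /tb /tc /te !inE eqxx ?orbT.
Qed.

Lemma rho_obt S0 S : rho_is S0 (log2 (IZR 6)) -> obtained_from S0 S -> rho_is S (log2 (IZR 6)).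
Proof.
move=> H0; elim=> [//|i S' _ IH|s S' _ IH]; [exact: rho_neg | exact: rho_perm].
Qed.

Theorem mainTheorem9 (S : {set triple}) :
  (obtained_from S_A S \/ obtained_from S_B S \/ obtained_from S_C S) ->
  rho_is S (log2 6%R).
Proof.
case=> [H|[H|H]]; [exact: rho_obt rhoA H | exact: rho_obt rhoB H | exact: rho_obt rhoC H].
Qed.
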